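(* Let $k\ge2$, let $\Pi\subsetneq\Sigma_k$ be a proper subshift, and let $T:\Pi\to\Sigma_k$ be the map constructed below. Then for every $y\in\Pi$, $V(T(y),\sigma)=V(y,\sigma)$.
   Context: $\Sigma_k=\{0,\dots,k-1\}^{\mathbb{N}}$ with metric $d(x,y)=\sum_{n\ge1}\delta(x_n,y_n)/2^n$ ($\delta(a,b)=0$ if $a=b$, $1$ otherwise) and shift $\sigma$. A subshift is a nonempty closed $\sigma$-invariant subset; a finite word is contained in $\Pi$ if it is a prefix of some point of $\Pi$. Construction of $T$: enumerate all finite words contained in $\Pi$ as $C_1,C_2,\dots$; fix a finite word $A_1$ not contained in $\Pi$; for $y\in\Pi$ let $Y_n$ be its first $n$ symbols; $B_n=C_nY_n\cdots Y_n$ ($Y_n$ repeated $|A_n|^2$ times), $A_{n+1}=A_nB_nA_n$; $T(y)$ is the point having every $A_n$ as prefix; the construction requires $|C_n|=o(|A_n|)$. $V(x,\sigma)$ denotes the set of weak$^*$ limit points of the empirical measures $\frac1n\sum_{i=0}^{n-1}\delta_{\sigma^i(x)}$. *)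

(* Defs.v *)
From HB Require Import structures.
From mathcomp Require Import all_boot all_order all_algebra.
From mathcomp Require Import all_classical all_reals all_analysis.
Set Implicit Arguments. Unset Strict Implicit. Unset Printing Implicit Defensive.
Import Order.TTheory GRing.Theory Num.Theory.
Import numFieldNormedType.Exports.
Local Open Scope classical_set_scope.
Local Open Scope ring_scope.

(* Alphabet {0,...,k-1}.  It is written 'I_(k.-1.+1) (which equals 'I_k for
   k >= 1, the only case used: the theorem assumes k >= 2) so that it is
   canonically inhabited (pointed), as required by the measurable-type
   structures of MathComp-Analysis. *)
Definition Alph (k : nat) := 'I_(k.-1.+1).
HB.instance Definition _ k := Choice.on (Alph k).
HB.instance Definition _ k := isPointed.Build (Alph k) ord0.
Definition Sigma (k : nat) := nat -> Alph k.
HB.instance Definition _ k := Pointed.on (Sigma k).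

Definition shift (k : nat) (x : Sigma k) : Sigma k := fun n => x n.+1.

(* The metric d(x,y) = sum_{n>=1} delta(x_n,y_n)/2^n ; positions of points are
   indexed from 0 here, so position n carries weight 1/2^(n+1). *)
Definition dist (R : realType) (k : nat) (x y : Sigma k) : R :=
  limn (fun N : nat => (\sum_(n < N) ((x n != y n)%:R / 2 ^+ n.+1) : R)).

Definition dopen (R : realType) (k : nat) (U : set (Sigma k)) : Prop :=
  forall x, U x -> exists2 e : R, 0 < e & forall y, @dist R k x y < e -> U y.

Definition dclosed (R : realType) (k : nat) (P : set (Sigma k)) : Prop :=
  forall x, (forall e : R, 0 < e -> exists2 y, P y & @dist R k x y < e) -> P x.

Definition dcontinuous (R : realType) (k : nat) (f : Sigma k -> R) : Prop :=
  forall x (e : R), 0 < e ->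
    exists2 d : R, 0 < d & forall y, @dist R k x y < d -> `|f x - f y| < e.

Definition subshift (R : realType) (k : nat) (P : set (Sigma k)) : Prop :=
  [/\ P !=set0, dclosed R P & forall x, P x -> P (shift x)].

Definition SigmaB (R : realType) (k : nat) := g_sigma_algebraType (@dopen R k).

Definition prefix_of (k : nat) (w : seq (Alph k)) (x : Sigma k) : Prop :=
  forall i, (i < size w)%N -> x i = nth (ord0 : Alph k) w i.

Definition contained (k : nat) (P : set (Sigma k)) (w : seq (Alph k)) : Prop :=
  exists2 x, P x & prefix_of w x.

Definition firstn (k : nat) (y : Sigma k) (n : nat) : seq (Alph k) := mkseq y n.

(* The words A_n of the construction, shifted by one: Aword C A1 y m = A_{m+1},
   where C m = C_{m+1}.  A_{n+1} = A_n B_n A_n, B_n = C_n Y_n^{|A_n|^2}. *)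
Fixpoint Aword (k : nat) (C : nat -> seq (Alph k)) (A1 : seq (Alph k))
    (y : Sigma k) (m : nat) : seq (Alph k) :=
  match m with
  | 0 => A1
  | m'.+1 =>
    let A := Aword C A1 y m' in
    A ++ (C m' ++ flatten (nseq (size A ^ 2) (firstn y m'.+1))) ++ A
  end.

(* (1/n) sum_{i<n} f(sigma^i x) = integral of f against the empirical measure
   (1/n) sum_{i<n} delta_{sigma^i x}. *)
Definition empirical_avg (R : realType) (k : nat) (f : Sigma k -> R)
    (x : Sigma k) (n : nat) : R :=
  (n%:R)^-1 * \sum_(i < n) f (iter i (@shift k) x).

(* V(x,sigma): weak* limit points (subsequential limits) of the empirical
   measures, as Borel probability measures on Sigma_k. Weak* convergence:
   integrals of every continuous real function converge. *)
Definition Vset (R : realType) (k : nat) (x : Sigma k)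
    : set (probability (SigmaB R k) R) :=
  [set mu : probability (SigmaB R k) R | exists phi : nat -> nat, (forall j, (phi j < phi j.+1)%N) /\
     forall f : Sigma k -> R, dcontinuous f ->
       (fun j => (empirical_avg f x (phi j))%:E) @ \oo -->
         (\int[mu]_z ((f : SigmaB R k -> R) z)%:E)%E].

(* Main.v *)
Require Import Defs.
From HB Require Import structures.
From mathcomp Require Import all_boot all_order all_algebra.
From mathcomp Require Import all_classical all_reals all_analysis.
From mathcomp Require Import ring lra.
From mathcomp Require Import zify.
Import Order.TTheory GRing.Theory Num.Theory.
Import numFieldNormedType.Exports.
Local Open Scope classical_set_scope.
Local Open Scope ring_scope.

Lemma iter_shift k (x : Sigma k) i n : iter i (@Defs.shift k) x n = x (n + i)%N.
Proof.
elim: i n => [|i IH] n /=; first by rewrite addn0.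
by rewrite /Defs.shift IH addnS addSn.
Qed.

Lemma dist_le (R : realType) k (x a : Sigma k) n :
  (forall i, (i < n)%N -> a i = x i) -> @Defs.dist R k x a <= ((2:R) ^+ n)^-1.
Proof.
move=> hax.
set u := (fun N : nat => \sum_(i < N) ((x i != a i)%:R / (2:R) ^+ i.+1)).
have t0 : forall i, 0 <= (x i != a i)%:R / (2:R) ^+ i.+1.
  by move=> i; apply: divr_ge0 => //; apply: exprn_ge0.
have hw : forall i, ((2:R) ^+ i.+1)^-1 = ((2:R) ^+ i)^-1 / 2.
  by move=> i; rewrite exprS invfM mulrC.
have wpos : forall i, 0 < ((2:R) ^+ i)^-1.
  by move=> i; rewrite invr_gt0 exprn_gt0.
have key : forall N, u N <= ((2:R) ^+ n)^-1 - ((2:R) ^+ (maxn N n))^-1.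
  elim=> [|N IH].
    by rewrite /u big_ord0 max0n subrr.
  rewrite /u big_ord_recr /= -/(u N).
  case: (ltnP N n) => hN.
    rewrite hax // eqxx /= mul0r addr0.
    by rewrite (maxn_idPr (ltnW hN)) (maxn_idPr hN) in IH *.
  rewrite (maxn_idPl hN) in IH; rewrite (maxn_idPl (leqW hN)).
  have : (x N != a N)%:R / (2:R) ^+ N.+1 <= ((2:R) ^+ N.+1)^-1.
    rewrite ler_pdivrMr ?exprn_gt0 // mulVf ?expf_neq0 //.
    by case: (x N != a N).
  rewrite !hw in IH * => h1.
  have := wpos N; lra.
have un : {homo u : p q / (p <= q)%N >-> p <= q}.
  move=> p q; elim: q => [|q IH]; first by rewrite leqn0 => /eqP ->.
  rewrite leq_eqVlt => /orP [/eqP -> //|]; rewrite ltnS => /IH h.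
  apply: le_trans h _; rewrite /u big_ord_recr /=; rewrite lerDl; exact: t0.
have ub : forall N, u N <= ((2:R) ^+ n)^-1.
  move=> N; apply: le_trans (key N) _; have := wpos (maxn N n); lra.
have cu : cvgn u.
  apply: cvgP; apply: nondecreasing_cvgn => //.
  by exists ((2:R) ^+ n)^-1 => _ [N _ <-]; exact: ub.
rewrite /Defs.dist; apply: limr_le => //; exact: nearW.
Qed.
Lemma fan k (P : seq (Alph k) -> Prop) :
  (forall w, (forall a, P (rcons w a)) -> P w) ->
  (forall x : Sigma k, exists n, P (firstn x n)) -> P [::].
Proof.
move=> H1 H2; apply: contrapT => nP.
have step : forall w, exists a : Alph k, ~ P w -> ~ P (rcons w a).
  move=> w; case: (pselect (P w)) => hw.
    by exists ord0.
  have : ~ (forall a, P (rcons w a)) by move/H1.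
  by move/existsNP => [a ha]; exists a.
have [ch hch] := choice step.
pose ws := fun n => iter n (fun w => rcons w (ch w)) [::].
pose x : Sigma k := fun n => ch (ws n).
have wsE : forall n, ws n = firstn x n.
  elim=> [//|n IH]; by rewrite /firstn mkseqS -/(firstn x n) -IH.
have nws : forall n, ~ P (ws n).
  by elim=> [//|n IH] /=; apply: hch.
have [n hn] := H2 x; apply: (nws n); by rewrite wsE.
Qed.

Lemma prefix_firstn k (x a : Sigma k) n :
  prefix_of (firstn x n) a -> forall i, (i < n)%N -> a i = x i.
Proof.
by move=> h i hi; rewrite h ?size_mkseq // nth_mkseq.
Qed.

Lemma exists_pow2 {R : realType} (d : R) : 0 < d -> exists n, ((2:R) ^+ n)^-1 < d.
Proof.
move=> d0; exists (Num.Def.archi_bound d^-1).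
set n := Num.Def.archi_bound _.
have hd : 0 <= d^-1 by rewrite invr_ge0 ltW.
have h := archi_boundP hd; rewrite -/n in h.
have h2 : (n%:R : R) <= (2:R) ^+ n by rewrite -natrX ler_nat ltnW // ltn_expl.
rewrite invf_plt ?posrE ?exprn_gt0 //; exact: lt_le_trans h h2.
Qed.

Lemma ucb (R : realType) k (f : Sigma k -> R) : dcontinuous f ->
  forall eps : R, 0 < eps -> exists K : nat, exists M : R,
   (forall a b : Sigma k, (forall i, (i < K)%N -> a i = b i) -> `|f a - f b| <= eps)
   /\ (forall a, `|f a| <= M).
Proof.
move=> fc eps e0.
pose P := fun w : seq (Alph k) => exists K : nat, exists M : R,
   (forall a b : Sigma k, prefix_of w a -> prefix_of w b ->
       (forall i, (i < K)%N -> a i = b i) -> `|f a - f b| <= eps)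
   /\ (forall a, prefix_of w a -> `|f a| <= M).
have : P [::].
  apply: fan.
  - move=> w H.
    have H' : forall a : Alph k, exists p : nat * R,
      (forall a0 b : Sigma k, prefix_of (rcons w a) a0 -> prefix_of (rcons w a) b ->
       (forall i, (i < p.1)%N -> a0 i = b i) -> `|f a0 - f b| <= eps)
      /\ (forall a0, prefix_of (rcons w a) a0 -> `|f a0| <= p.2).
      by move=> a; have [K [M h]] := H a; exists (K, M).
    have [KM hKM] := choice H'.
    exists (\max_(c : 'I_(k.-1.+1)) (KM c).1 + (size w).+1)%N.
    exists (\sum_(c : 'I_(k.-1.+1)) `|(KM c).2|).
    have pre : forall a : Sigma k, prefix_of w a -> prefix_of (rcons w (a (size w))) a.
      move=> a ha i; rewrite size_rcons ltnS leq_eqVlt => /orP [/eqP ->|hi].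
        by rewrite nth_rcons ltnn eqxx.
      by rewrite nth_rcons hi ha.
    split.
    + move=> a b ha hb hab.
      have e : a (size w) = b (size w) by apply: hab; rewrite addnS ltnS leq_addl.
      have [h1 _] := hKM (a (size w)).
      apply: h1; [exact: pre | rewrite e; exact: pre|].
      move=> i hi; apply: hab; apply: (leq_trans hi).
      apply: leq_trans (leq_addr _ _); exact: (@leq_bigmax _ (fun c => (KM c).1) (a (size w))).
    + move=> a ha; have [_ h2] := hKM (a (size w)).
      apply: le_trans (h2 _ (pre _ ha)) _.
      apply: le_trans (ler_norm _) _.
      rewrite (bigD1 (a (size w))) //=; rewrite lerDl; exact: sumr_ge0.
  - move=> x.
    have [d d0 hd] := fc x (eps / 2) ltac:(lra).
    have [n hn] := exists_pow2 _ d0.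
    exists n, 0%N, (`|f x| + eps).
    have cl : forall a, prefix_of (firstn x n) a -> `|f x - f a| < eps / 2.
      move=> a ha; apply: hd; apply: le_lt_trans hn.
      apply: dist_le; exact: prefix_firstn.
    split.
    + move=> a b ha hb _.
      have := cl a ha; have := cl b hb.
      have := ler_normB (f x - f b) (f x - f a).
      have -> : f x - f b - (f x - f a) = f a - f b by ring.
      lra.
    + move=> a ha; have := cl a ha.
      have := ler_normB (f x) (f x - f a).
      have -> : f x - (f x - f a) = f a by ring.
      lra.
move=> [K [M [h1 h2]]]; exists K, M; split.
- by move=> a b; apply: h1.
- by move=> a; apply: h2.
Qed.
Lemma sum_shift (R : realType) (H : nat -> R) q N :
  \sum_(q <= i < q + N) H i = \sum_(i < N) H (q + i)%N.
Proof.
rewrite -{1}(add0n q) big_addn addKn big_mkord; apply: eq_bigr => i _.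
by rewrite addnC.
Qed.

Lemma crude {R : realType} {F : nat -> R} {nu B : R} a b :
  (forall i, `|F i - nu| <= B) ->
  `|\sum_(a <= i < b) (F i - nu)| <= (b - a)%:R * B.
Proof.
move=> hB; apply: le_trans (ler_norm_sum _ _ _) _.
apply: le_trans (ler_sum _ (fun i _ => hB i)) _.
by rewrite sumr_const_nat mulr_natl.
Qed.

Lemma tri {R : realType} {x y ex ey : R} :
  `|x| <= ex -> `|y| <= ey -> `|x + y| <= ex + ey.
Proof. move=> hx hy; apply: le_trans (ler_normD _ _) _; exact: lerD. Qed.

Lemma sum_if_le (R : realType) (e B : R) K N : 0 <= e -> 0 <= B ->
  \sum_(r < N) (if (r + K <= N)%N then e else e + B) <= N%:R * e + K%:R * B.
Proof.
move=> he hB.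
rewrite -(big_mkord (fun _ => true) (fun r => if (r + K <= N)%N then e else e + B)).
rewrite (@big_cat_nat _ _ _ (N - K) 0 N _ _ (leq0n _) (leq_subr K N)) /=.
have e1 : \sum_(0 <= i < N - K) (if (i + K <= N)%N then e else e + B) = (N - K)%:R * e.
  have -> : (N - K)%:R * e = \sum_(0 <= i < N - K) e by rewrite sumr_const_nat subn0 mulr_natl.
  apply: eq_big_nat => i /andP [_ hi].
  by rewrite ifT //; move: hi; lia.
have e2 : \sum_(N - K <= i < N) (if (i + K <= N)%N then e else e + B) <= (N - (N - K))%:R * (e + B).
  have -> : (N - (N - K))%:R * (e + B) = \sum_(N - K <= i < N) (e + B) by rewrite sumr_const_nat mulr_natl.
  apply: ler_sum_nat => i _.
  case: ifP => _; [rewrite lerDl //| by []].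
rewrite e1; apply: le_trans (lerD (lexx _) e2) _.
have hmin : (N - (N - K) <= K)%N by lia.
have hmin2 : (N - (N - K) <= N)%N by apply: leq_subr.
have hs : ((N - K) + (N - (N - K)) = N)%N by rewrite subnKC // leq_subr.
rewrite mulrDr addrA -mulrDl -natrD hs lerD2l.
by apply: ler_wpM2r => //; rewrite ler_nat.
Qed.
Lemma core (R : realType) (F G : nat -> R) (M eps : R) (K : nat) (L c : nat -> nat) :
  0 <= M -> 0 <= eps -> (forall i, `|F i| <= M) -> (forall i, `|G i| <= M) ->
  (0 < L 0)%N -> (forall n, L n.+1 = 2 * L n + c n + n.+1 * L n ^ 2)%N ->
  (forall n j r, (j < L n ^ 2)%N -> (r + K <= n.+1)%N ->
      `|F (L n + c n + j * n.+1 + r)%N - G r| <= eps) ->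
  forall n t, (L n.+1 <= t < L n.+2)%N ->
  `|\sum_(i < t) F i - t%:R * ((n.+2)%:R^-1 * \sum_(i < n.+2) G i)| <=
    t%:R * (2 * eps + (10 * M + 4 * M * K%:R) / (n.+1)%:R
            + 2 * M * ((c n)%:R / (L n)%:R + (c n.+1)%:R / (L n.+1)%:R)).
Proof.
move=> hM he hF hG hL0 hLrec hblk.
have Lpos : forall n, (0 < L n)%N.
  by elim=> [//|n IH]; rewrite hLrec; lia.
have Lgt : forall n, (n < L n)%N.
  by elim=> [//|n IH]; rewrite hLrec; lia.
have SGb : forall N, `|\sum_(i < N) G i| <= N%:R * M.
  move=> N; have -> : N%:R * M = \sum_(i < N) M by rewrite sumr_const card_ord mulr_natl.
  apply: le_trans (ler_norm_sum _ _ _) _; apply: ler_sum => i _; exact: hG.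
have copy : forall n j, (j < L n ^ 2)%N ->
    `|\sum_(r < n.+1) F (L n + c n + j * n.+1 + r)%N - \sum_(r < n.+1) G r|
      <= n.+1%:R * eps + K%:R * (2 * M).
  move=> n j hj; rewrite -sumrB; apply: le_trans (ler_norm_sum _ _ _) _.
  have h2M : 0 <= 2 * M by lra.
  apply: le_trans (@sum_if_le _ eps (2 * M) K n.+1 he h2M).
  apply: ler_sum => r _; case: ifP => hr; first exact: hblk.
  have := hF (L n + c n + j * n.+1 + r)%N; have := hG r.
  have := ler_normB (F (L n + c n + j * n.+1 + r)%N) (G r); lra.
have blocks : forall n J (nu : R), (J <= L n ^ 2)%N ->
    `|\sum_(L n + c n <= i < L n + c n + J * n.+1) (F i - nu)| <=
      J%:R * (n.+1%:R * eps + K%:R * (2 * M) + `|\sum_(r < n.+1) G r - n.+1%:R * nu|).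
  move=> n; elim=> [|J IH] nu hJ.
    by rewrite mul0n addn0 big_geq // normr0 mul0r.
  rewrite (@big_cat_nat _ _ _ (L n + c n + J * n.+1)); last 2 first.
  - exact: leq_addr.
  - by rewrite leq_add2l leq_mul2r ltnW ?orbT.
  rewrite /= mulSnr addnA.
  rewrite -natr1 mulrDl mul1r.
  apply: tri; first by apply: IH; apply: ltnW.
  rewrite sum_shift.
  rewrite sumrB sumr_const card_ord mulr_natl.
  have hc := copy n J hJ.
  have e : \sum_(i < n.+1) F (L n + c n + J * n.+1 + i)%N - nu *+ n.+1 =
     (\sum_(r < n.+1) F (L n + c n + J * n.+1 + r)%N - \sum_(r < n.+1) G r) +
     (\sum_(r < n.+1) G r - n.+1%:R * nu) by rewrite -mulr_natl; ring.
  rewrite e; apply: tri => //; rewrite -mulr_natl; exact: hc.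

move=> n t /andP [h1 h2].
pose nu := ((n.+2)%:R^-1 * \sum_(i < n.+2) G i).
have N2pos : (0 : R) < n.+2%:R by apply: ltr0Sn.
have hnu : `|nu| <= M.
  rewrite /nu normrM ger0_norm ?invr_ge0 ?ler0n // mulrC ler_pdivrMr //.
  by rewrite mulrC; apply: SGb.
have hFnu : forall i, `|F i - nu| <= 2 * M.
  move=> i; have := hF i; have := ler_normB (F i) nu; lra.
have hSGnu : `|\sum_(r < n.+1) G r - n.+1%:R * nu| <= 2 * M.
  rewrite /nu (big_ord_recr n.+1) /=.
  set s := \sum_(i < n.+1) G i; set g := G _.
  have hs := SGb n.+1; have hg : `|g| <= M by apply: hG.
  have e : s - n.+1%:R * (n.+2%:R^-1 * (s + g)) = (n.+2%:R)^-1 * (s - n.+1%:R * g).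
    have -> : (n.+2%:R : R) = n.+1%:R + 1 by rewrite -natr1.
    field; apply: lt0r_neq0; have := ler0n R n; lra.
  rewrite e normrM ger0_norm ?invr_ge0 ?ler0n // mulrC ler_pdivrMr //.
  have h3 := ler_normB s (n.+1%:R * g).
  rewrite normrM normr_nat in h3.
  have h4 : n.+1%:R * `|g| <= n.+1%:R * M by apply: ler_wpM2l => //; apply: ler0n.
  have -> : (n.+2%:R : R) = n.+1%:R + 1 by rewrite -natr1.
  have h5 : (0 : R) <= n.+1%:R by apply: ler0n.
  nra.
have hSGnu2 : `|\sum_(r < n.+2) G r - n.+2%:R * nu| = 0.
  by rewrite /nu mulrA mulfV ?mul1r ?subrr ?normr0 // lt0r_neq0.
have eS : \sum_(i < t) F i - t%:R * nu = \sum_(0 <= i < t) (F i - nu).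
  by rewrite big_mkord sumrB sumr_const card_ord mulr_natl.
rewrite -/nu eS.
have hLm := hLrec n; have hLm2 := hLrec n.+1.
have Ln1 := Lgt n.
rewrite (@big_cat_nat _ _ _ (L n) 0 t) ?leq0n //=; last by lia.
rewrite (@big_cat_nat _ _ _ (L n + c n) (L n) t) ?leq_addr //=; last by lia.
rewrite (@big_cat_nat _ _ _ (L n + c n + L n ^ 2 * n.+1) (L n + c n) t) ?leq_addr //=; last by lia.
rewrite (@big_cat_nat _ _ _ (L n.+1) (L n + c n + L n ^ 2 * n.+1) t) //=; last by lia.
have b1 := crude 0 (L n) hFnu; rewrite subn0 in b1.
have b2 := crude (L n) (L n + c n) hFnu; rewrite addKn in b2.
have b3 := blocks n (L n ^ 2)%N nu (leqnn _).
have b4 := crude (L n + c n + L n ^ 2 * n.+1)%N (L n.+1) hFnu.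
have e4 : (L n.+1 - (L n + c n + L n ^ 2 * n.+1) = L n)%N by clear -hLm; lia.
rewrite e4 in b4.
have b5 : `|\sum_(L n.+1 <= i < t) (F i - nu)| <=
   (c n.+1)%:R * (2 * M) + t%:R * eps + t%:R * (K%:R * (2 * M) / n.+1%:R)
   + t%:R * (2 * M / n.+1%:R).
  have hN1 : (0 : R) < n.+1%:R by apply: ltr0Sn.
  have hT0 : (0 : R) <= t%:R by apply: ler0n.
  have hK0 : (0 : R) <= K%:R by apply: ler0n.
  have hx1 : 0 <= t%:R * (K%:R * (2 * M) / n.+1%:R).
    by apply: mulr_ge0 => //; apply: divr_ge0; [nra | exact: ltW].
  have hx2 : 0 <= t%:R * (2 * M / n.+1%:R).
    by apply: mulr_ge0 => //; apply: divr_ge0; [lra | exact: ltW].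
  have hx3 : 0 <= t%:R * eps by apply: mulr_ge0.
  case: (leqP t (L n.+1 + c n.+1)) => hP.
    apply: le_trans (crude _ _ hFnu) _.
    have : (((t - L n.+1)%N)%:R : R) <= (c n.+1)%:R by rewrite ler_nat; clear -hP; lia.
    move=> h; have : (((t - L n.+1)%N)%:R : R) * (2 * M) <= (c n.+1)%:R * (2 * M).
      by apply: ler_wpM2r => //; lra.
    move=> h'; apply: le_trans h' _; rewrite -!addrA lerDl.
    by apply: addr_ge0 => //; apply: addr_ge0.
  have gen : forall J, (J <= L n.+1 ^ 2)%N -> (L n.+1 + c n.+1 + J * n.+2 <= t)%N ->
      ((t - (L n.+1 + c n.+1 + J * n.+2)) * n.+1 <= t)%N ->
      `|\sum_(L n.+1 <= i < t) (F i - nu)| <=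
      (c n.+1)%:R * (2 * M) + t%:R * eps + t%:R * (K%:R * (2 * M) / n.+1%:R)
      + t%:R * (2 * M / n.+1%:R).
    move=> J hJ hQ hr.
    rewrite (@big_cat_nat _ _ _ (L n.+1 + c n.+1) (L n.+1) t) ?leq_addr //=; last by apply: ltnW.
    rewrite (@big_cat_nat _ _ _ (L n.+1 + c n.+1 + J * n.+2) (L n.+1 + c n.+1) t) ?leq_addr //=.
    have c1 := crude (L n.+1) (L n.+1 + c n.+1) hFnu; rewrite addKn in c1.
    have c2 := blocks n.+1 J nu hJ; rewrite hSGnu2 addr0 in c2.
    have c3 := crude (L n.+1 + c n.+1 + J * n.+2)%N t hFnu.
    apply: le_trans (tri c1 (tri c2 c3)) _.
    set r := (t - _)%N in c3 hr *.
    have hJ2 : (J%:R : R) * n.+2%:R <= t%:R.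
      by rewrite -natrM ler_nat; clear -hQ; lia.
    have hJ1 : (J%:R : R) * n.+1%:R <= t%:R.
      by rewrite -natrM ler_nat; clear -hQ; nia.
    have hr1 : (r%:R : R) * n.+1%:R <= t%:R by rewrite -natrM ler_nat.
    have hJ1' : (J%:R : R) <= t%:R / n.+1%:R by rewrite ler_pdivlMr.
    have hr1' : (r%:R : R) <= t%:R / n.+1%:R by rewrite ler_pdivlMr.
    have e1 : t%:R * (K%:R * (2 * M) / n.+1%:R) = K%:R * (2 * M) * (t%:R / n.+1%:R) by ring.
    have e2 : t%:R * (2 * M / n.+1%:R) = 2 * M * (t%:R / n.+1%:R) by ring.
    rewrite e1 e2.
    have hJ0 : (0 : R) <= J%:R by apply: ler0n.
    have hKM : 0 <= K%:R * (2 * M) by nra.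
    have i1 : (J%:R : R) * (n.+2%:R * eps) <= t%:R * eps.
      rewrite mulrA; apply: ler_wpM2r => //.
    have i2 : (J%:R : R) * (K%:R * (2 * M)) <= K%:R * (2 * M) * (t%:R / n.+1%:R).
      rewrite mulrC; apply: ler_wpM2l => //.
    have i3 : (r%:R : R) * (2 * M) <= 2 * M * (t%:R / n.+1%:R).
      rewrite mulrC; apply: ler_wpM2l => //; lra.
    rewrite mulrDr -!addrA lerD2l; exact: lerD i1 (lerD i2 i3).
  have Lm1 : (n.+1 < L n.+1)%N by apply: Lgt.
  have sqm : (L n.+1 <= L n.+1 ^ 2)%N by rewrite expnS expn1 leq_pmulr // Lpos.
  case: (leqP t (L n.+1 + c n.+1 + L n.+1 ^ 2 * n.+2)) => hB.
    pose J := ((t - (L n.+1 + c n.+1)) %/ n.+2)%N.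
    have hd := divn_eq (t - (L n.+1 + c n.+1)) n.+2.
    have hm : ((t - (L n.+1 + c n.+1)) %% n.+2 < n.+2)%N by apply: ltn_pmod.
    rewrite -/J in hd.
    set q := ((t - (L n.+1 + c n.+1)) %% n.+2)%N in hd hm.
    apply: (gen J).
    - rewrite -(@leq_pmul2r n.+2) //.
      clear -hd hB hP; lia.
    - clear -hd hP; lia.
    - have -> : (t - (L n.+1 + c n.+1 + J * n.+2) = q)%N by clear -hd hP; lia.
      have : (n.+1 * n.+1 <= t)%N.
        apply: leq_trans (_ : n.+1 * L n ^ 2 <= t)%N.
          apply: leq_mul => //; apply: leq_trans Ln1 _.
          by rewrite expnS expn1 leq_pmulr // Lpos.
        clear -h1 hLm; lia.
      move=> h; apply: leq_trans h; apply: leq_mul => //.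
  apply: (gen (L n.+1 ^ 2)%N) => //.
  - by apply: ltnW.
  - have hr : (t - (L n.+1 + c n.+1 + L n.+1 ^ 2 * n.+2) < L n.+1)%N.
      have hc : (n.+2 * L n.+1 ^ 2 = L n.+1 ^ 2 * n.+2)%N by apply: mulnC.
      have hp := Lpos n.+1.
      by clear -h2 hLm2 hc hp; lia.
    apply: leq_trans (_ : L n.+1 * n.+1 <= _)%N.
      by apply: leq_mul => //; apply: ltnW.
    apply: leq_trans (ltnW hB).
    apply: leq_trans (leq_addl _ _).
    by apply: leq_mul => //.

have b3' : `|\sum_(L n + c n <= i < L n + c n + L n ^ 2 * n.+1) (F i - nu)| <=
   ((L n ^ 2)%N)%:R * (n.+1%:R * eps + K%:R * (2 * M) + 2 * M).
  apply: le_trans b3 _; apply: ler_wpM2l; first exact: ler0n.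
  by rewrite lerD2l.
apply: le_trans (tri b1 (tri b2 (tri b3' (tri b4 b5)))) _.
have sq : (L n <= L n ^ 2)%N by rewrite expnS expn1 leq_pmulr // Lpos.
have nf2 : (n.+1 * L n ^ 2 <= t)%N by clear -h1 hLm; lia.
have nf1 : (n.+1 * L n <= t)%N by apply: leq_trans (leq_mul (leqnn _) sq) nf2.
have nf3 : (L n <= t)%N by clear -h1 hLm; lia.
set T := (t%:R : R).
have hN : (0 : R) < n.+1%:R by apply: ltr0Sn.
have ha : (0 : R) < (L n)%:R by rewrite ltr0n.
have hLm0 : (0 : R) < (L n.+1)%:R by rewrite ltr0n.
have haN : (L n)%:R <= T / n.+1%:R.
  by rewrite ler_pdivlMr // mulrC -natrM ler_nat.
have ha2N : ((L n ^ 2)%N)%:R <= T / n.+1%:R.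
  by rewrite ler_pdivlMr // mulrC -natrM ler_nat.
have ha2N' : ((L n ^ 2)%N)%:R * n.+1%:R <= T.
  by rewrite mulrC -natrM ler_nat.
have haT : (L n)%:R <= T by rewrite ler_nat.
have hLmT : (L n.+1)%:R <= T by rewrite ler_nat.
have hcn : (c n)%:R = (c n)%:R / (L n)%:R * (L n)%:R :> R.
  by rewrite (divfK (lt0r_neq0 _)).
have hcm : (c n.+1)%:R = (c n.+1)%:R / (L n.+1)%:R * (L n.+1)%:R :> R.
  by rewrite (divfK (lt0r_neq0 _)).
have rn0 : 0 <= (c n)%:R / (L n)%:R :> R by rewrite divr_ge0 ?ler0n.
have rm0 : 0 <= (c n.+1)%:R / (L n.+1)%:R :> R by rewrite divr_ge0 ?ler0n.
set rn := (c n)%:R / (L n)%:R in hcn rn0 *.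
set rm := (c n.+1)%:R / (L n.+1)%:R in hcm rm0 *.
set Q := T / n.+1%:R in haN ha2N *.
have eQ1 : T * (2 * M / n.+1%:R) = 2 * M * Q by rewrite /Q; ring.
have eQ2 : T * (K%:R * (2 * M) / n.+1%:R) = K%:R * (2 * M) * Q by rewrite /Q; ring.
have eQ3 : T * (2 * eps + (10 * M + 4 * M * K%:R) / n.+1%:R + 2 * M * (rn + rm)) =
  2 * eps * T + (10 * M + 4 * M * K%:R) * Q + 2 * M * rn * T + 2 * M * rm * T.
  by rewrite /Q; ring.
rewrite eQ1 eQ2 eQ3.
have hK : (0 : R) <= K%:R by apply: ler0n.
have hMK : 0 <= K%:R * (2 * M) by nra.
have i1 : (L n)%:R * (2 * M) <= 2 * M * Q by nra.
have i2 : (c n)%:R * (2 * M) <= 2 * M * rn * T.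
  rewrite hcn; have := mulr_ge0 rn0 hM; nra.
have i5 : (c n.+1)%:R * (2 * M) <= 2 * M * rm * T.
  rewrite hcm; have := mulr_ge0 rm0 hM; nra.
have i3 : ((L n ^ 2)%N)%:R * (n.+1%:R * eps + K%:R * (2 * M) + 2 * M) <=
   eps * T + K%:R * (2 * M) * Q + 2 * M * Q.
  have := mulr_ge0 hK hM; nra.
have hMQ : 0 <= M * Q by apply: mulr_ge0 => //; rewrite /Q divr_ge0 ?ler0n // ltW.
have hKMQ : 0 <= K%:R * M * Q by apply: mulr_ge0 => //; apply: mulr_ge0.
lra.
Qed.
Lemma size_flatten_nseq (T : Type) n (w : seq T) :
  size (flatten (nseq n w)) = (n * size w)%N.
Proof. by elim: n => [//|n IH] /=; rewrite size_cat IH mulSn. Qed.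

Lemma nth_flatten_nseq (T : Type) (d : T) n (w : seq T) j r :
  (r < size w)%N -> (j < n)%N ->
  nth d (flatten (nseq n w)) (j * size w + r) = nth d w r.
Proof.
move=> hr; elim: n j => [//|n IH] [|j] hj /=.
  by rewrite mul0n add0n nth_cat hr.
rewrite nth_cat mulSn -addnA ltnNge leq_addr /= addKn; exact: IH.
Qed.

Lemma size_Aword k (C : nat -> seq (Alph k)) A1 y m :
  size (Aword C A1 y m.+1) =
  (2 * size (Aword C A1 y m) + size (C m) + m.+1 * size (Aword C A1 y m) ^ 2)%N.
Proof.
rewrite /= !size_cat size_flatten_nseq /firstn size_mkseq.
set a := size (Aword C A1 y m); set b := size (C m).
rewrite (mulnC (a ^ 2)%N); lia.
Qed.

Lemma nth_Aword k (C : nat -> seq (Alph k)) A1 y n j r :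
  (j < size (Aword C A1 y n) ^ 2)%N -> (r < n.+1)%N ->
  nth ord0 (Aword C A1 y n.+1)
    (size (Aword C A1 y n) + size (C n) + j * n.+1 + r) = y r.
Proof.
move=> hj hr /=.
rewrite -addnA -addnA nth_cat ltnNge leq_addr /= addKn.
have lt : (j * n.+1 + r < size (Aword C A1 y n) ^ 2 * n.+1)%N.
  apply: (@leq_trans ((j.+1) * n.+1)); first by rewrite mulSnr; lia.
  by rewrite leq_mul2r hj orbT.
rewrite nth_cat size_cat size_flatten_nseq /firstn size_mkseq ltn_add2l lt.
rewrite nth_cat ltnNge leq_addr /= addKn.
have := @nth_flatten_nseq _ ord0 (size (Aword C A1 y n) ^ 2) (mkseq y n.+1) j r.
rewrite size_mkseq => -> //; by rewrite nth_mkseq.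
Qed.
Lemma key (R : realType) k (f : Sigma k -> R) (x y : Sigma k)
  (C : nat -> seq (Alph k)) (A1 : seq (Alph k)) :
  dcontinuous f -> (0 < size A1)%N ->
  (forall m, prefix_of (Aword C A1 y m) x) ->
  (fun m => (size (C m))%:R / (size (Aword C A1 y m))%:R : R) @ \oo --> 0 ->
  forall d : R, 0 < d -> exists N, forall m t, (N <= m)%N ->
    (size (Aword C A1 y m) <= t < size (Aword C A1 y m.+1))%N ->
    `|empirical_avg f x t - empirical_avg f y m.+1| <= d.
Proof.
move=> fc hA1 hx hg d d0.
pose L := fun m => size (Aword C A1 y m).
pose c := fun m => size (C m).
have d4 : 0 < d / 4 by lra.
have [K [M [hUC hM]]] := @ucb R k f fc (d / 4) d4.
have M0 : 0 <= M by apply: le_trans (hM x); apply: normr_ge0.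
pose F := fun i => f (iter i (@Defs.shift k) x).
pose G := fun i => f (iter i (@Defs.shift k) y).
have hLrec : forall n, L n.+1 = (2 * L n + c n + n.+1 * L n ^ 2)%N.
  by move=> n; rewrite /L size_Aword.
have hblk : forall n j r, (j < L n ^ 2)%N -> (r + K <= n.+1)%N ->
    `|F (L n + c n + j * n.+1 + r)%N - G r| <= d / 4.
  move=> n j r hj hr; apply: hUC => i hi.
  rewrite !iter_shift (addnC i r).
  have hri : (r + i < n.+1)%N by lia.
  rewrite -(@nth_Aword k C A1 y n j (r + i) hj hri).
  have -> : (i + (L n + c n + j * n.+1 + r) = L n + c n + j * n.+1 + (r + i))%N by lia.
  apply: hx.
  rewrite size_Aword -/(L n) -/(c n).
  have : (j * n.+1 + (r + i) < L n ^ 2 * n.+1)%N.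
    apply: (@leq_trans ((j.+1) * n.+1)); first by rewrite mulSnr; lia.
    by rewrite leq_mul2r hj orbT.
  rewrite (mulnC n.+1); lia.
have cr := @core R F G M (d / 4) K L c M0 (ltW d4) (fun i => hM _) (fun i => hM _) hA1 hLrec hblk.
have [N1 hN1] : exists N1, forall n, (N1 <= n)%N ->
    `|(c n)%:R / (L n)%:R| <= d / (16 * (M + 1)) :> R.
  have e : 0 < d / (16 * (M + 1)) by apply: divr_gt0 => //; lra.
  move/cvgr0Pnorm_le : hg => /(_ _ e) [N _ hN]; exists N => n hn; exact: hN.
pose B := 4 * (10 * M + 4 * M * K%:R) / d.
have hB0 : 0 <= B by apply: divr_ge0; [apply: mulr_ge0; [lra|] | lra];
  apply: addr_ge0; [lra | apply: mulr_ge0; [lra | apply: ler0n]].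
pose N2 := Num.Def.archi_bound B.
have hN2 := archi_boundP hB0.
exists (maxn N1 N2).+1 => m t hm ht.
case: m hm ht => [//|n] hm ht.
rewrite ltnS geq_max in hm; case/andP: hm => hn1 hn2.
have hc := cr n t ht.
have tpos : (0 < t)%N.
  have Lpos : forall n, (0 < L n)%N by elim => [//|n' IH]; rewrite hLrec; lia.
  case/andP: ht => ht _; apply: leq_trans ht; exact: Lpos.
have tR : (0 : R) < t%:R by rewrite ltr0n.
rewrite /empirical_avg.
have -> : t%:R^-1 * \sum_(i < t) f (iter i (Defs.shift (k:=k)) x) -
   n.+2%:R^-1 * \sum_(i < n.+2) f (iter i (Defs.shift (k:=k)) y) =
   t%:R^-1 * (\sum_(i < t) F i - t%:R * (n.+2%:R^-1 * \sum_(i < n.+2) G i)).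
  rewrite /F /G; field; apply/andP; split; apply: lt0r_neq0 => //; have := ler0n R n; lra.
rewrite normrM ger0_norm ?invr_ge0 ?ler0n // ler_pdivrMl //.
apply: le_trans hc _; rewrite [d * _]mulrC; apply: ler_wpM2l; first exact: ltW.
have r1 := hN1 n hn1.
have r2 := hN1 n.+1 (leqW hn1).
rewrite ger0_norm ?divr_ge0 ?ler0n // in r1 r2.
have hNn : B < n.+1%:R.
  apply: lt_le_trans hN2 _; rewrite ler_nat; lia.
have hNpos : (0 : R) < n.+1%:R by apply: ltr0Sn.
have q1 : (10 * M + 4 * M * K%:R) / n.+1%:R <= d / 4.
  rewrite ler_pdivrMr //.
  have eB : B * d = 4 * (10 * M + 4 * M * K%:R) by rewrite /B; field; apply: lt0r_neq0.
  have : B * d < n.+1%:R * d by rewrite ltr_pM2r.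
  lra.
have q2 : 2 * M * ((c n)%:R / (L n)%:R + (c n.+1)%:R / (L n.+1)%:R) <= d / 4.
  set u := (c n)%:R / (L n)%:R in r1 *; set v := (c n.+1)%:R / (L n.+1)%:R in r2 *.
  have e16 : d / (16 * (M + 1)) * (M + 1) = d / 16.
    field; by repeat (apply/andP; split); apply: lt0r_neq0; lra.
  have hu : u * (M + 1) <= d / 16.
    by rewrite -e16; apply: ler_wpM2r; [lra | exact: r1].
  have hv : v * (M + 1) <= d / 16.
    by rewrite -e16; apply: ler_wpM2r; [lra | exact: le_trans (ler_norm _) r2].
  have u0 : 0 <= u by rewrite /u divr_ge0 ?ler0n.
  have v0 : 0 <= v by rewrite /v divr_ge0 ?ler0n.
  nra.
move: q1 q2.
set a1 := (10 * M + 4 * M * K%:R) / n.+1%:R.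
set a2 := 2 * M * _.
move=> q1 q2; lra.
Qed.
Lemma inc_ge {phi : nat -> nat} : (forall j, (phi j < phi j.+1)%N) -> forall j, (j <= phi j)%N.
Proof. move=> h; elim=> [//|j IH]; exact: leq_ltn_trans IH (h j). Qed.

Lemma nearN (P : nat -> Prop) : (exists J, forall j, (J <= j)%N -> P j) -> \forall j \near \oo, P j.
Proof. move=> [J hJ]; exists J => // j /= hj; exact: hJ. Qed.

Lemma ediff (R : realType) (u v : nat -> R) (l : \bar R) :
  (fun j => (u j)%:E) @ \oo --> l -> (fun j => v j - u j) @ \oo --> (0:R) ->
  (fun j => (v j)%:E) @ \oo --> l.
Proof.
move=> hu hd.
have hd' : (fun j => (v j - u j)%:E) @ \oo --> (0:R)%:E.
  by apply: cvg_EFin; [exact: nearW | exact: hd].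
have hdef : (l +? (0:R)%:E)%E by apply: fin_num_adde_defl.
have := cvgeD hdef hu hd'.
rewrite adde0.
have -> : (fun j => ((u j)%:E + (v j - u j)%:E)%E) = (fun j => (v j)%:E).
  by apply/funext => j; rewrite -EFinD addrC subrK.
by apply; apply: eventually_filter.
Qed.

Lemma sub_cvg {T : topologicalType} (u : nat -> T) (l : T) (g : nat -> nat) :
  u @ \oo --> l -> (forall j, (g j < g j.+1)%N) -> (u \o g) @ \oo --> l.
Proof.
move=> hu hg; apply: cvg_comp hu.
apply/cvgnyPge => A; apply: nearN; exists A => j hj.
exact: leq_trans hj (inc_ge hg j).
Qed.

Lemma extract (w : nat -> nat) :
  (forall N, exists J, forall j, (J <= j)%N -> (N <= w j)%N) ->
  exists g : nat -> nat, (forall j, (g j < g j.+1)%N) /\ (forall j, (w (g j) < w (g j.+1))%N).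
Proof.
move=> hw.
have h : forall a, exists b, (a < b)%N /\ (w a < w b)%N.
  move=> a; have [J hJ] := hw (w a).+1.
  exists (maxn J a.+1); split; first by rewrite leq_max leqnn orbT.
  by apply: hJ; rewrite leq_max leqnn.
have [h' hh'] := choice h.
exists (fun j => iter j h' 0%N); split => j /=; [exact: (hh' _).1 | exact: (hh' _).2].
Qed.
Theorem proposition3p5 (R : realType) (k : nat) (hk : (2 <= k)%N)
  (Pi : set (Sigma k)) (hPi : subshift R Pi) (hproper : Pi <> setT)
  (C : nat -> seq (Alph k))
  (hC_in : forall n, contained Pi (C n))
  (hC_onto : forall w, contained Pi w -> exists n, C n = w)
  (hC_inj : injective C)
  (A1 : seq (Alph k)) (hA1 : ~ contained Pi A1)
  (hgrowth : forall y, Pi y ->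
     (fun m => (size (C m))%:R / (size (Aword C A1 y m))%:R : R) @ \oo --> 0)
  (T : Sigma k -> Sigma k)
  (hT : forall y, Pi y -> forall m, prefix_of (Aword C A1 y m) (T y)) :
  forall y, Pi y -> @Vset R k (T y) = @Vset R k y.
Proof.
move=> y Py.
have hA1pos : (0 < size A1)%N.
  case: hPi => [[z Pz] _ _].
  rewrite lt0n size_eq0; apply/negP => /eqP E; apply: hA1; rewrite E.
  by exists z.
pose L := fun m => size (Aword C A1 y m).
have hLrec : forall n, L n.+1 = (2 * L n + size (C n) + n.+1 * L n ^ 2)%N.
  by move=> n; rewrite /L size_Aword.
have Lpos : forall n, (0 < L n)%N by elim => [//|n IH]; rewrite hLrec; lia.
have Lsucc : forall n, (L n < L n.+1)%N by move=> n; rewrite hLrec; have := Lpos n; lia.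
have Lmono : forall a b, (a < b)%N -> (L a < L b)%N.
  move=> a b hab.
  exact: (@homo_ltn nat L (fun u v => (u < v)%N) (fun y0 x0 z0 => @ltn_trans y0 x0 z0) Lsucc a b hab).
have Lle : forall a b, (a <= b)%N -> (L a <= L b)%N.
  move=> a b; rewrite leq_eqVlt => /orP [/eqP -> //|/Lmono]; exact: ltnW.
have find : forall t, (L 0 <= t)%N -> exists m, (L m <= t < L m.+1)%N.
  elim=> [|t IH] ht.
    by move: ht; rewrite leqNgt (Lpos 0).
  case: (leqP (L 0) t) => h0.
    have [m /andP [hm1 hm2]] := IH h0.
    case: (ltnP t.+1 (L m.+1)) => h3.
      by exists m; rewrite h3 andbT; apply: leqW.
    exists m.+1; apply/andP; split => //.
    have := Lsucc m.+1; lia.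
  exists 0%N; apply/andP; split => //; exact: leq_ltn_trans h0 (Lsucc 0).
have hx := hT y Py.
have hg := hgrowth y Py.
have key' := fun f fc => @key R k f (T y) y C A1 fc hA1pos hx hg.
apply/seteqP; split => mu /= [phi [hphi hconv]].
- have hm : forall j, exists m, (L 0 <= phi j)%N -> (L m <= phi j < L m.+1)%N.
    move=> j; case: (leqP (L 0) (phi j)) => h.
      by have [m hm] := find _ h; exists m.
    by exists 0%N => h'; exfalso; move: h h'; lia.
  have [mm hmm] := choice hm.
  have hbig : forall N j, (L N <= phi j)%N -> (N <= mm j)%N.
    move=> N j hj; have h0 : (L 0 <= phi j)%N by apply: leq_trans hj; apply: Lle.
    have /andP [_ h2] := hmm j h0.
    rewrite leqNgt; apply/negP => hlt.
    have := Lle _ _ hlt; lia.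
  have hinf : forall N, exists J, forall j, (J <= j)%N -> (N <= mm j)%N.
    move=> N; exists (L N) => j hj; apply: hbig.
    exact: leq_trans hj (inc_ge hphi j).
  have [g [hg1 hg2]] := @extract mm hinf.
  exists (fun j => (mm (g j)).+1); split.
    by move=> j; rewrite ltnS; exact: hg2.
  move=> f fc.
  have hc' : (fun j => (empirical_avg f (T y) (phi (g j)))%:E) @ \oo --> _ :=
    @sub_cvg _ _ _ g (hconv f fc) hg1.
  apply: (@ediff R _ _ _ hc').
  apply/cvgr0Pnorm_le => e e0.
  have [N hN] := key' f fc e e0.
  apply: nearN; exists (L N) => j hj.
  have hpj : (L N <= phi (g j))%N.
    exact: leq_trans hj (leq_trans (inc_ge hg1 j) (inc_ge hphi (g j))).
  have h0 : (L 0 <= phi (g j))%N by apply: leq_trans hpj; apply: Lle.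
  rewrite distrC; apply: hN; [exact: hbig hpj | exact: hmm].
- have p1 : forall j, (0 < phi j.+1)%N by move=> j; exact: leq_ltn_trans (leq0n _) (hphi j).
  exists (fun j => L (phi j.+1).-1); split.
    move=> j; apply: Lmono; have := hphi j.+1; have := p1 j; lia.
  move=> f fc.
  have hc1 : (fun j => (empirical_avg f y (phi j.+1))%:E) @ \oo --> _ :=
    @sub_cvg _ _ _ succn (hconv f fc) (fun j => ltnSn j.+1).
  apply: (@ediff R _ _ _ hc1).
  apply/cvgr0Pnorm_le => e e0.
  have [N hN] := key' f fc e e0.
  apply: nearN; exists N => j hj.
  have := hN (phi j.+1).-1 (L (phi j.+1).-1).
  rewrite prednK //; apply.
    have := inc_ge hphi j.+1; lia.
  by rewrite leqnn /=; have := Lsucc (phi j.+1).-1; rewrite prednK.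
Qed.
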